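(* For a topological space $X$ the following are equivalent: (1) $X$ is quasi-Polish; (2) $X$ is homeomorphic to the subspace of non-compact elements of some $\omega$-continuous domain (with the Scott topology); (3) $X$ is homeomorphic to the subspace of non-compact elements of some $\omega$-algebraic domain (with the Scott topology).
   Context: In a poset $P$, $x\ll y$ ($x$ way below $y$) if for every directed $D\subseteq P$ with existing supremum $\bigsqcup D\sqsupseteq y$ there is $d\in D$ with $x\sqsubseteq d$; $x$ is compact if $x\ll x$. A dcpo is a poset in which every directed set has a supremum. An $\omega$-continuous domain is a dcpo with a countable subset $B$ such that for each $x$, $\{b\in B\mid b\ll x\}$ contains a directed subset with supremum $x$; it is $\omega$-algebraic if $B$ can be taken to consist of compact elements. The Scott topology consists of upper sets $U$ such that whenever a directed $D$ has $\bigsqcup D\in U$ then $D\cap U\neq\emptyset$. A quasi-metric on a set $X$ is a function $d\colon X\times X\to[0,\infty)$ with $x=y$ iff $d(x,y)=d(y,x)=0$ and $d(x,z)\le d(x,y)+d(y,z)$; it induces the topology generated by $B_d(x,\varepsilon)=\{y\mid d(x,y)<\varepsilon\}$; $\widehat d(x,y)=\max\{d(x,y),d(y,x)\}$. $(x_n)$ is Cauchy if for every $\varepsilon>0$ there is $n_0$ with $d(x_n,x_m)<\varepsilon$ for all $m\ge n\ge n_0$; $d$ is complete if every Cauchy sequence converges in the topology of $\widehat d$. A space is quasi-Polish if it is countably based and its topology is induced by a complete quasi-metric. *)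

(* Defs.v *)
From Stdlib Require Import Reals.
Open Scope R_scope.

Definition is_topology {T : Type} (O : (T -> Prop) -> Prop) : Prop :=
  O (fun _ => True) /\
  (forall U V, O U -> O V -> O (fun x => U x /\ V x)) /\
  (forall F : (T -> Prop) -> Prop,
      (forall U, F U -> O U) -> O (fun x => exists U, F U /\ U x)).

Definition generated_topology {T : Type} (S : (T -> Prop) -> Prop) (U : T -> Prop) : Prop :=
  forall O' : (T -> Prop) -> Prop, is_topology O' -> (forall V, S V -> O' V) -> O' U.

Definition countably_based {T : Type} (O : (T -> Prop) -> Prop) : Prop :=
  exists B : nat -> (T -> Prop),
    (forall n, O (B n)) /\
    (forall U, O U -> forall x, U x -> exists n, B n x /\ (forall y, B n y -> U y)).

Definition converges {T : Type} (O : (T -> Prop) -> Prop) (x : nat -> T) (l : T) : Prop :=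
  forall U, O U -> U l -> exists N, forall n, (N <= n)%nat -> U (x n).

Definition quasi_metric {T : Type} (d : T -> T -> R) : Prop :=
  (forall x y, 0 <= d x y) /\
  (forall x y, x = y <-> (d x y = 0 /\ d y x = 0)) /\
  (forall x y z, d x z <= d x y + d y z).

Definition balls {T : Type} (d : T -> T -> R) (U : T -> Prop) : Prop :=
  exists x eps, forall y, U y <-> d x y < eps.

Definition qm_topology {T : Type} (d : T -> T -> R) : (T -> Prop) -> Prop :=
  generated_topology (balls d).

Definition dhat {T : Type} (d : T -> T -> R) (x y : T) : R := Rmax (d x y) (d y x).

Definition cauchy {T : Type} (d : T -> T -> R) (x : nat -> T) : Prop :=
  forall eps, 0 < eps -> exists n0, forall n m, (n0 <= n)%nat -> (n <= m)%nat ->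
    d (x n) (x m) < eps.

Definition complete_qm {T : Type} (d : T -> T -> R) : Prop :=
  forall x : nat -> T, cauchy d x -> exists l, converges (qm_topology (dhat d)) x l.

Definition quasi_Polish {T : Type} (O : (T -> Prop) -> Prop) : Prop :=
  countably_based O /\
  exists d : T -> T -> R, quasi_metric d /\ complete_qm d /\
    (forall U, O U <-> qm_topology d U).

Definition partial_order {P : Type} (le : P -> P -> Prop) : Prop :=
  (forall x, le x x) /\
  (forall x y z, le x y -> le y z -> le x z) /\
  (forall x y, le x y -> le y x -> x = y).

Definition directed {P : Type} (le : P -> P -> Prop) (D : P -> Prop) : Prop :=
  (exists d, D d) /\
  (forall a b, D a -> D b -> exists c, D c /\ le a c /\ le b c).

Definition is_sup {P : Type} (le : P -> P -> Prop) (D : P -> Prop) (s : P) : Prop :=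
  (forall d, D d -> le d s) /\
  (forall u, (forall d, D d -> le d u) -> le s u).

Definition way_below {P : Type} (le : P -> P -> Prop) (x y : P) : Prop :=
  forall D s, directed le D -> is_sup le D s -> le y s -> exists d, D d /\ le x d.

Definition compact_el {P : Type} (le : P -> P -> Prop) (x : P) : Prop :=
  way_below le x x.

Definition dcpo {P : Type} (le : P -> P -> Prop) : Prop :=
  partial_order le /\ (forall D, directed le D -> exists s, is_sup le D s).

Definition countable_set {P : Type} (B : P -> Prop) : Prop :=
  exists e : nat -> option P, forall b, B b -> exists n, e n = Some b.

Definition omega_continuous {P : Type} (le : P -> P -> Prop) : Prop :=
  dcpo le /\
  exists B : P -> Prop, countable_set B /\
    forall x, exists D, (forall d, D d -> B d /\ way_below le d x) /\
                        directed le D /\ is_sup le D x.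

Definition omega_algebraic {P : Type} (le : P -> P -> Prop) : Prop :=
  dcpo le /\
  exists B : P -> Prop, countable_set B /\ (forall b, B b -> compact_el le b) /\
    forall x, exists D, (forall d, D d -> B d /\ way_below le d x) /\
                        directed le D /\ is_sup le D x.

Definition scott_open {P : Type} (le : P -> P -> Prop) (U : P -> Prop) : Prop :=
  (forall x y, U x -> le x y -> U y) /\
  (forall D s, directed le D -> is_sup le D s -> U s -> exists d, D d /\ U d).

(* (T, O) is homeomorphic to the subspace {p | p not compact} of P with the
   Scott topology: f is a bijection from T onto the non-compact elements and
   the opens of T are exactly the preimages of Scott-open sets. *)
Definition homeomorphic_to_noncompact {T P : Type} (O : (T -> Prop) -> Prop)
    (le : P -> P -> Prop) : Prop :=
  exists f : T -> P,
    (forall x y, f x = f y -> x = y) /\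
    (forall x, ~ compact_el le (f x)) /\
    (forall p, ~ compact_el le p -> exists x, f x = p) /\
    (forall U, O U <-> exists V, scott_open le V /\ forall x, U x <-> V (f x)).

(* Main.v *)
Require Import Defs.
From Stdlib Require Import Reals Lra Lia Classical ClassicalEpsilon FunctionalExtensionality PropExtensionality ProofIrrelevance Cantor.
Open Scope R_scope.

Definition h (k : nat) : R := (/2) ^ k.

Lemma h_pos k : 0 < h k.
Proof. unfold h. apply pow_lt. lra. Qed.

Lemma h_S k : h (S k) = h k / 2.
Proof. unfold h. simpl. lra. Qed.

Lemma h_le k m : (k <= m)%nat -> h m <= h k.
Proof.
  intros H. induction H. lra.
  rewrite h_S. pose proof (h_pos m). lra.
Qed.

Lemma h_lt k m : (k < m)%nat -> h m < h k.
Proof.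
  intros H. apply Nat.le_succ_l in H.
  eapply Rle_lt_trans; [apply h_le; exact H|].
  rewrite h_S. pose proof (h_pos k). lra.
Qed.

Lemma h_0 : h 0 = 1.
Proof. reflexivity. Qed.

Lemma h_bound k : h k * INR (S k) <= 1.
Proof.
  induction k. unfold h, INR; simpl. lra.
  rewrite h_S. rewrite !S_INR. rewrite S_INR in IHk.
  pose proof (h_pos k). pose proof (pos_INR k).
  assert (h k <= 1) by (rewrite <- h_0; apply h_le; lia).
  replace (h k / 2 * (INR k + 1 + 1)) with ((h k * (INR k + 1))/2 + h k / 2) by field. lra.
Qed.

Lemma h_small eps : 0 < eps -> exists k, h k < eps.
Proof.
  intros He. destruct (INR_archimed eps 1 He) as [n Hn].
  exists n. pose proof (h_bound n). pose proof (h_pos n).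
  rewrite S_INR in H. nra.
Qed.

Lemma least_ex (P : nat -> Prop) : (exists n, P n) -> exists n, P n /\ forall m, P m -> (n <= m)%nat.
Proof.
  intros [n Hn]. apply NNPP. intros Hno.
  assert (forall k, forall m, (m <= k)%nat -> ~ P m).
  { induction k; intros m Hm HP.
    - apply Hno. exists m. split; auto. intros. lia.
    - apply Hno. exists m. split; auto. intros m' Hm'.
      destruct (Compare_dec.le_lt_dec m m'); auto.
      exfalso. apply (IHk m'); auto. lia. }
  apply (H n n); auto.
Qed.

Definition qdist (P : nat -> Prop) : R :=
  match excluded_middle_informative (exists c, P c) with
  | left H => h (proj1_sig (constructive_indefinite_description _ (least_ex P H)))
  | right _ => 0
  end.

Lemma qdist_spec P :
  (exists c0, P c0 /\ (forall m, P m -> (c0 <= m)%nat) /\ qdist P = h c0) \/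
  ((forall c, ~ P c) /\ qdist P = 0).
Proof.
  unfold qdist. destruct (excluded_middle_informative _) as [H|H].
  - left. destruct (constructive_indefinite_description _ _) as [c [Hc Hm]]. simpl.
    exists c. auto.
  - right. split; auto. intros c Hc. apply H. eauto.
Qed.

Lemma qd_nonneg P : 0 <= qdist P.
Proof.
  destruct (qdist_spec P) as [[c [_ [_ E]]]|[_ E]]; rewrite E; [pose proof (h_pos c)|]; lra.
Qed.

Lemma qd_zero P : qdist P = 0 <-> forall c, ~ P c.
Proof.
  destruct (qdist_spec P) as [[c [Hc [_ E]]]|[H E]]; rewrite E; split; auto.
  - intros Z. pose proof (h_pos c). lra.
  - intros Hn. exfalso. eapply Hn; eauto.
Qed.

Lemma qd_ge P c : P c -> h c <= qdist P.
Proof.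
  intros Hc. destruct (qdist_spec P) as [[c0 [Hc0 [Hm E]]]|[H E]].
  - rewrite E. apply h_le. auto.
  - exfalso. eapply H; eauto.
Qed.

Lemma qd_lt P eps : 0 < eps -> (qdist P < eps <-> forall c, P c -> h c < eps).
Proof.
  intros He. split.
  - intros Hl c Hc. pose proof (qd_ge P c Hc). lra.
  - intros H. destruct (qdist_spec P) as [[c0 [Hc0 [Hm E]]]|[_ E]]; rewrite E; auto.
Qed.

Lemma qd_max (P Q S : nat -> Prop) : (forall c, P c -> Q c \/ S c) ->
  qdist P <= Rmax (qdist Q) (qdist S).
Proof.
  intros H. pose proof (qd_nonneg Q). pose proof (qd_nonneg S).
  destruct (qdist_spec P) as [[c0 [Hc0 [Hm E]]]|[_ E]]; rewrite E.
  - destruct (H c0 Hc0) as [Hq|Hs].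
    + pose proof (qd_ge _ _ Hq). eapply Rle_trans; [exact H2|apply Rmax_l].
    + pose proof (qd_ge _ _ Hs). eapply Rle_trans; [exact H2|apply Rmax_r].
  - eapply Rle_trans; [exact H0|apply Rmax_l].
Qed.

Lemma qd_small P K : (forall c, P c -> (K < c)%nat) -> qdist P <= h (S K).
Proof.
  intros H. destruct (qdist_spec P) as [[c0 [Hc0 [Hm E]]]|[_ E]]; rewrite E.
  - apply h_le. apply H; auto.
  - left. apply h_pos.
Qed.

Lemma set_ext {T : Type} (U V : T -> Prop) : (forall x, U x <-> V x) -> U = V.
Proof.
  intros H. apply functional_extensionality. intros x. apply propositional_extensionality. auto.
Qed.

Lemma gen_top_is_topology {T : Type} (S : (T -> Prop) -> Prop) : is_topology (generated_topology S).
Proof.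
  split; [|split].
  - intros O' HO' _. apply HO'.
  - intros U V HU HV O' HO' HS. apply HO'; [apply HU|apply HV]; auto.
  - intros F HF O' HO' HS. apply HO'. intros U HU. apply HF; auto.
Qed.

Lemma gen_top_incl {T : Type} (S : (T -> Prop) -> Prop) V : S V -> generated_topology S V.
Proof. intros H O' _ HS. auto. Qed.

Lemma open_by_nbhd {T : Type} (O : (T -> Prop) -> Prop) (HO : is_topology O) (U : T -> Prop) :
  (forall x, U x -> exists V, O V /\ V x /\ forall y, V y -> U y) -> O U.
Proof.
  intros H. destruct HO as [_ [_ Hu]].
  assert (E : U = (fun x => exists V, (O V /\ forall y, V y -> U y) /\ V x)).
  { apply set_ext. intros x. split.
    - intros Hx. destruct (H x Hx) as [V [HV [Vx HVU]]]. exists V. auto.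
    - intros [V [[_ HVU] Vx]]. auto. }
  rewrite E. apply Hu. intros V [HV _]. auto.
Qed.

Definition triangle {T : Type} (d : T -> T -> R) : Prop :=
  forall x y z, d x z <= d x y + d y z.

Lemma qm_open_balls {T : Type} (d : T -> T -> R) (Ht : triangle d) U :
  qm_topology d U -> forall x, U x -> exists eps, 0 < eps /\ forall y, d x y < eps -> U y.
Proof.
  intros HU. apply (HU (fun U => forall x, U x -> exists eps, 0 < eps /\ forall y, d x y < eps -> U y)).
  - split; [|split].
    + intros x _. exists 1. split; [lra|auto].
    + intros A B HA HB x [Ax Bx].
      destruct (HA x Ax) as [e1 [He1 H1]]. destruct (HB x Bx) as [e2 [He2 H2]].
      exists (Rmin e1 e2). split. apply Rmin_glb_lt; auto.
      intros y Hy. split; [apply H1|apply H2]; eapply Rlt_le_trans; eauto; [apply Rmin_l|apply Rmin_r].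
    + intros F HF x [A [FA Ax]]. destruct (HF A FA x Ax) as [e [He H]].
      exists e. split; auto. intros y Hy. exists A. auto.
  - intros V [z [r Hzr]] x Vx. apply Hzr in Vx.
    exists (r - d z x). split. lra.
    intros y Hy. apply Hzr. pose proof (Ht z x y). lra.
Qed.

Lemma qm_open_of {T : Type} (d : T -> T -> R) (Hself : forall x, d x x = 0) U :
  (forall x, U x -> exists eps, 0 < eps /\ forall y, d x y < eps -> U y) -> qm_topology d U.
Proof.
  intros H. apply open_by_nbhd. apply gen_top_is_topology.
  intros x Ux. destruct (H x Ux) as [e [He Hy]].
  exists (fun y => d x y < e). split; [|split].
  - apply gen_top_incl. exists x, e. tauto.
  - rewrite Hself. auto.
  - auto.
Qed.

Lemma dhat_triangle {T : Type} (d : T -> T -> R) : triangle d -> triangle (dhat d).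
Proof.
  intros Ht x y z. unfold dhat.
  pose proof (Ht x y z). pose proof (Ht z y x).
  pose proof (Rmax_l (d x y) (d y x)). pose proof (Rmax_r (d x y) (d y x)).
  pose proof (Rmax_l (d y z) (d z y)). pose proof (Rmax_r (d y z) (d z y)).
  apply Rmax_lub; lra.
Qed.

Lemma conv_dhat {T : Type} (d : T -> T -> R) (Ht : triangle d) (x : nat -> T) (l : T) :
  (forall eps, 0 < eps -> exists N, forall n, (N <= n)%nat -> dhat d l (x n) < eps) ->
  converges (qm_topology (dhat d)) x l.
Proof.
  intros H U HU Ul.
  destruct (qm_open_balls (dhat d) (dhat_triangle d Ht) U HU l Ul) as [e [He Hy]].
  destruct (H e He) as [N HN]. exists N. intros n Hn. apply Hy. auto.
Qed.

Definition cont_hyp {P : Type} (le : P -> P -> Prop) : Prop :=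
  forall x, exists D, (forall z, D z -> way_below le z x) /\ directed le D /\ is_sup le D x.

Lemma wb_le {P : Type} (le : P -> P -> Prop) (Hpo : partial_order le) x y :
  way_below le x y -> le x y.
Proof.
  destruct Hpo as [Hr [Ht Ha]]. intros H.
  destruct (H (fun z => z = y) y) as [d [Hd Hxd]].
  - split. exists y; auto. intros a b -> ->. exists y. auto.
  - split. intros d ->. auto. intros u Hu. auto.
  - auto.
  - subst. auto.
Qed.

Lemma wb_mono {P : Type} (le : P -> P -> Prop) (Hpo : partial_order le) a b c d :
  le a b -> way_below le b c -> le c d -> way_below le a d.
Proof.
  destruct Hpo as [Hr [Ht Ha]]. intros H1 H2 H3 D s HD Hs Hds.
  destruct (H2 D s HD Hs (Ht _ _ _ H3 Hds)) as [e [He Hbe]]. exists e. split; eauto.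
Qed.

Lemma sup_unique {P : Type} (le : P -> P -> Prop) (Hpo : partial_order le) D s s' :
  is_sup le D s -> is_sup le D s' -> s = s'.
Proof.
  destruct Hpo as [Hr [Ht Ha]]. intros [H1 H2] [H3 H4]. apply Ha; auto.
Qed.

Lemma wb_sup_directed {P : Type} (le : P -> P -> Prop) (Hpo : partial_order le)
  (Hc : cont_hyp le) D s b :
  directed le D -> is_sup le D s -> way_below le b s -> exists d, D d /\ way_below le b d.
Proof.
  intros HD Hs Hb. pose proof Hpo as Hpo'. destruct Hpo' as [Hr [Ht Ha]].
  set (D' := fun a => exists d, D d /\ way_below le a d).
  assert (HD' : directed le D').
  { split.
    - destruct HD as [[d Hd] _]. destruct (Hc d) as [Dd [H1 [[[a Ha'] _] _]]].
      exists a. exists d. auto.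
    - intros a1 a2 [d1 [Hd1 W1]] [d2 [Hd2 W2]].
      destruct HD as [_ HD2]. destruct (HD2 d1 d2 Hd1 Hd2) as [d3 [Hd3 [L1 L2]]].
      destruct (Hc d3) as [Dd [Hw [Hdir Hsup]]].
      assert (W1' : way_below le a1 d3) by (eapply wb_mono; eauto).
      assert (W2' : way_below le a2 d3) by (eapply wb_mono; eauto).
      destruct (W1' Dd d3 Hdir Hsup (Hr _)) as [c1 [Hc1 Lc1]].
      destruct (W2' Dd d3 Hdir Hsup (Hr _)) as [c2 [Hc2 Lc2]].
      destruct Hdir as [_ Hdir2]. destruct (Hdir2 c1 c2 Hc1 Hc2) as [c [Hcc [M1 M2]]].
      exists c. split; [|split; eauto]. exists d3. auto. }
  assert (Hs' : is_sup le D' s).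
  { destruct Hs as [Hs1 Hs2]. split.
    - intros a [d [Hd W]]. eapply Ht; [apply (wb_le le Hpo); eauto|auto].
    - intros u Hu. apply Hs2. intros d Hd. destruct (Hc d) as [Dd [Hw [Hdir [_ Hsup2]]]].
      apply Hsup2. intros z Hz. apply Hu. exists d. auto. }
  destruct (Hb D' s HD' Hs' (Hr _)) as [a [[d [Hd W]] Hba]].
  exists d. split; auto. eapply wb_mono; eauto.
Qed.

Lemma wb_upper_open {P : Type} (le : P -> P -> Prop) (Hpo : partial_order le)
  (Hc : cont_hyp le) b : scott_open le (fun x => way_below le b x).
Proof.
  split.
  - intros x y Hx Hxy. eapply wb_mono; eauto. apply Hpo.
  - intros D s HD Hs Hb. eapply wb_sup_directed; eauto.
Qed.

Lemma noncompact_witness {P : Type} (le : P -> P -> Prop) (Hpo : partial_order le)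
  (Bs : P -> Prop)
  (Hb : forall x, exists D, (forall d, D d -> Bs d /\ way_below le d x) /\ directed le D /\ is_sup le D x)
  bi bj x :
  way_below le bi x -> way_below le bj x -> ~ compact_el le x ->
  exists bl, Bs bl /\ way_below le bi bl /\ way_below le bj bl /\ way_below le bl x /\ ~ le bl bi.
Proof.
  intros Wi Wj Hnc. pose proof Hpo as Hpo'. destruct Hpo' as [Hr [Ht Ha]].
  assert (Hc : cont_hyp le).
  { intros y. destruct (Hb y) as [D [H1 H2]]. exists D. split; auto. intros z Hz. apply H1; auto. }
  destruct (Hb x) as [D [HDb [HD Hs]]].
  destruct (wb_sup_directed le Hpo Hc D x bi HD Hs Wi) as [d1 [Hd1 W1]].
  destruct (wb_sup_directed le Hpo Hc D x bj HD Hs Wj) as [d2 [Hd2 W2]].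
  assert (Hd3 : exists d3, D d3 /\ ~ le d3 bi).
  { apply NNPP. intros Hn. apply Hnc.
    assert (le x bi).
    { apply Hs. intros d Hd. apply NNPP. intros Hnd. apply Hn. exists d. auto. }
    assert (x = bi) by (apply Ha; auto; apply (wb_le le Hpo); auto).
    subst. unfold compact_el. auto. }
  destruct Hd3 as [d3 [Hd3 N3]].
  destruct HD as [_ HD2].
  destruct (HD2 d1 d2 Hd1 Hd2) as [d12 [Hd12 [L1 L2]]].
  destruct (HD2 d12 d3 Hd12 Hd3) as [d [Hd [L12 L3]]].
  exists d. split; [apply HDb; auto|]. split; [|split; [|split]].
  - eapply wb_mono; eauto.
  - eapply wb_mono; eauto.
  - apply HDb; auto.
  - intros Hle. apply N3. eauto.
Qed.

Definition EE {P : Type} (le : P -> P -> Prop) (e : nat -> option P) (l : nat) (p : P) : Prop :=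
  exists b, e l = Some b /\ way_below le b p.

Definition WW {P : Type} (le : P -> P -> Prop) (e : nat -> option P) (c l : nat) : Prop :=
  match Cantor.of_nat c with
  | (0, b) => l = b
  | (1, _) => True
  | (S (S i), j) => exists bi bj bl, e i = Some bi /\ e j = Some bj /\ e l = Some bl /\
       way_below le bi bl /\ way_below le bj bl /\ ~ le bl bi
  end.

Definition term {P : Type} (le : P -> P -> Prop) (e : nat -> option P) (c : nat) (p q : P) : Prop :=
  exists l, WW le e c l /\ EE le e l p /\ forall l', (l' <= l)%nat -> WW le e c l' -> ~ EE le e l' q.

Lemma WW_I {P : Type} le (e : nat -> option P) n l : WW le e (Cantor.to_nat (0%nat, n)) l <-> l = n.
Proof. unfold WW. rewrite Cantor.cancel_of_to. tauto. Qed.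

Lemma WW_1 {P : Type} le (e : nat -> option P) l : WW le e (Cantor.to_nat (1%nat, O)) l.
Proof. unfold WW. rewrite Cantor.cancel_of_to. exact I. Qed.

Lemma WW_2 {P : Type} le (e : nat -> option P) i j l : WW le e (Cantor.to_nat (S (S i), j)) l <->
  exists bi bj bl, e i = Some bi /\ e j = Some bj /\ e l = Some bl /\
       way_below le bi bl /\ way_below le bj bl /\ ~ le bl bi.
Proof. unfold WW. rewrite Cantor.cancel_of_to. tauto. Qed.

Lemma EE_mono {P : Type} le (Hpo : partial_order le) (e : nat -> option P) l p q :
  EE le e l p -> le p q -> EE le e l q.
Proof.
  intros [b [Hb W]] H. exists b. split; auto. eapply wb_mono; eauto. apply Hpo.
Qed.

Lemma term_split {P : Type} le (e : nat -> option P) c p q r :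
  term le e c p r -> term le e c p q \/ term le e c q r.
Proof.
  intros [l [Wl [El H]]]. destruct (classic (term le e c p q)) as [Hq|Hq]; auto.
  right. assert (exists l', (l' <= l)%nat /\ WW le e c l' /\ EE le e l' q).
  { apply NNPP. intros Hn. apply Hq. exists l. split; auto. split; auto.
    intros l' H1 H2 H3. apply Hn. eauto. }
  destruct H0 as [l' [H1 [H2 H3]]]. exists l'. split; auto. split; auto.
  intros l'' H4 H5. apply H; auto. lia.
Qed.

Lemma term_refl {P : Type} le (e : nat -> option P) c p : ~ term le e c p p.
Proof. intros [l [Wl [El H]]]. apply (H l); auto. Qed.

Lemma term_anti {P : Type} le (Hpo : partial_order le) (e : nat -> option P) c p q q' :
  term le e c p q' -> le q q' -> term le e c p q.
Proof.
  intros [l [Wl [El H]]] Hq. exists l. split; auto. split; auto.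
  intros l' H1 H2 H3. apply (H l' H1 H2). eapply EE_mono; eauto.
Qed.

Lemma EE_I_le {P : Type} le (Hpo : partial_order le) (e : nat -> option P) (Bs : P -> Prop)
  (He : forall b, Bs b -> exists n, e n = Some b)
  (Hb : forall x, exists D, (forall d, D d -> Bs d /\ way_below le d x) /\ directed le D /\ is_sup le D x)
  p q : (forall n, EE le e n p -> EE le e n q) -> le p q.
Proof.
  intros H. destruct (Hb p) as [D [HD [_ [_ Hs]]]]. apply Hs. intros d Hd.
  destruct (HD d Hd) as [Bd Wd]. destruct (He d Bd) as [n Hn].
  destruct (H n) as [b [Hb' Wb]]. exists d; auto.
  rewrite Hn in Hb'. injection Hb' as ->. apply (wb_le le Hpo). auto.
Qed.

Lemma noterm_I {P : Type} le (e : nat -> option P) n p q :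
  ~ term le e (Cantor.to_nat (0%nat, n)) p q -> EE le e n p -> EE le e n q.
Proof.
  intros Hn Ep. apply NNPP. intros Eq. apply Hn. exists n. split; [apply WW_I; auto|]. split; auto.
  intros l' _ Hw. apply WW_I in Hw. subst. auto.
Qed.

Definition dB {T P : Type} (le : P -> P -> Prop) (e : nat -> option P) (f : T -> P) (x y : T) : R :=
  qdist (fun c => term le e c (f x) (f y)).

Lemma dB_self {T P : Type} le e (f : T -> P) x : dB le e f x x = 0.
Proof. apply qd_zero. intros c. apply term_refl. Qed.

Lemma dB_triangle {T P : Type} le e (f : T -> P) : triangle (dB le e f).
Proof.
  intros x y z. unfold dB.
  pose proof (qd_max (fun c => term le e c (f x) (f z)) (fun c => term le e c (f x) (f y))
     (fun c => term le e c (f y) (f z)) (fun c => term_split le e c _ _ _)).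
  pose proof (qd_nonneg (fun c => term le e c (f x) (f y))).
  pose proof (qd_nonneg (fun c => term le e c (f y) (f z))).
  eapply Rle_trans; [exact H|]. apply Rmax_lub; lra.
Qed.

Lemma dB_qm {T P : Type} le (Hpo : partial_order le) e (f : T -> P) (Bs : P -> Prop)
  (He : forall b, Bs b -> exists n, e n = Some b)
  (Hb : forall x, exists D, (forall d, D d -> Bs d /\ way_below le d x) /\ directed le D /\ is_sup le D x)
  (Hinj : forall x y, f x = f y -> x = y) : quasi_metric (dB le e f).
Proof.
  split; [|split].
  - intros. apply qd_nonneg.
  - intros x y. split.
    + intros ->. rewrite dB_self. auto.
    + intros [H1 H2]. apply Hinj. unfold dB in *. rewrite qd_zero in H1, H2.
      destruct Hpo as [Hr [Ht Ha]]. apply Ha.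
      * eapply EE_I_le; eauto. split; auto. intros n. apply noterm_I. apply H1.
      * eapply EE_I_le; eauto. split; auto. intros n. apply noterm_I. apply H2.
  - apply dB_triangle.
Qed.

Lemma EE_open {P : Type} le (Hpo : partial_order le) (Hc : cont_hyp le) (e : nat -> option P) n :
  scott_open le (EE le e n).
Proof.
  split.
  - intros. eapply EE_mono; eauto.
  - intros D s HD Hs [b [Hb W]]. destruct (wb_sup_directed le Hpo Hc D s b HD Hs W) as [d [Hd W']].
    exists d. split; auto. exists b. auto.
Qed.

Lemma EE_base {P : Type} le (Hpo : partial_order le) (e : nat -> option P) (Bs : P -> Prop)
  (He : forall b, Bs b -> exists n, e n = Some b)
  (Hb : forall x, exists D, (forall d, D d -> Bs d /\ way_below le d x) /\ directed le D /\ is_sup le D x)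
  V x : scott_open le V -> V x -> exists n, EE le e n x /\ forall y, EE le e n y -> V y.
Proof.
  intros [Vu Vi] Vx. destruct (Hb x) as [D [HD [Hdir Hs]]].
  destruct (Vi D x Hdir Hs Vx) as [d [Dd Vd]]. destruct (HD d Dd) as [Bd Wd].
  destruct (He d Bd) as [n Hn]. exists n. split. exists d; auto.
  intros y [b [Hb' Wb]]. rewrite Hn in Hb'. injection Hb' as <-. apply (Vu d); auto.
  apply (wb_le le Hpo); auto.
Qed.

Lemma coord_approx {P : Type} le (Hpo : partial_order le) (Hc : cont_hyp le) (e : nat -> option P)
  p0 D s c (Q : Prop) :
  directed le D -> is_sup le D s -> (term le e c p0 s -> Q) -> exists d, D d /\ (term le e c p0 d -> Q).
Proof.
  intros HD Hs HQ. destruct (classic Q) as [q|nq].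
  { destruct HD as [[d Hd] _]. exists d. auto. }
  destruct (classic (exists l, WW le e c l /\ EE le e l p0)) as [Hex|Hnex].
  2:{ destruct HD as [[d Hd] _]. exists d. split; auto. intros [l [Wl [El _]]]. exfalso. eauto. }
  destruct (least_ex _ Hex) as [l0 [[W0 E0] Hmin]].
  assert (exists l', (l' <= l0)%nat /\ WW le e c l' /\ EE le e l' s) as [l' [H1 [H2 H3]]].
  { apply NNPP. intros Hn. apply nq. apply HQ. exists l0. split; auto. split; auto.
    intros l' A B C. apply Hn. eauto. }
  destruct (EE_open le Hpo Hc e l') as [_ Hi].
  destruct (Hi D s HD Hs H3) as [d [Dd Ed]]. exists d. split; auto.
  intros [l [Wl [El Hl]]]. exfalso. apply (Hl l'); auto.
  specialize (Hmin l (conj Wl El)). lia.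
Qed.

Lemma coords_approx {P : Type} le (Hpo : partial_order le) (Hc : cont_hyp le) (e : nat -> option P)
  p0 D s (Q : nat -> Prop) :
  directed le D -> is_sup le D s -> (forall c, term le e c p0 s -> Q c) ->
  forall K, exists d, D d /\ forall c, (c <= K)%nat -> term le e c p0 d -> Q c.
Proof.
  intros HD Hs HQ K. induction K.
  - destruct (coord_approx le Hpo Hc e p0 D s 0 (Q 0%nat) HD Hs (HQ 0%nat)) as [d [Dd Hd]].
    exists d. split; auto. intros c Hc0. replace c with 0%nat by lia. auto.
  - destruct IHK as [d1 [D1 H1]].
    destruct (coord_approx le Hpo Hc e p0 D s (S K) (Q (S K)) HD Hs (HQ (S K))) as [d2 [D2 H2]].
    destruct HD as [_ HD2]. destruct (HD2 d1 d2 D1 D2) as [d [Dd [L1 L2]]].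
    exists d. split; auto. intros c Hck Ht.
    destruct (Nat.eq_dec c (S K)) as [->|Hne].
    + apply H2. eapply term_anti; eauto.
    + apply H1. lia. eapply term_anti; eauto.
Qed.

Lemma dB_topology {T P : Type} (O : (T -> Prop) -> Prop) (HO : is_topology O)
  le (Hpo : partial_order le) (e : nat -> option P) (Bs : P -> Prop)
  (He : forall b, Bs b -> exists n, e n = Some b)
  (Hb : forall x, exists D, (forall d, D d -> Bs d /\ way_below le d x) /\ directed le D /\ is_sup le D x)
  (f : T -> P)
  (Htop : forall U, O U <-> exists V, scott_open le V /\ forall x, U x <-> V (f x)) :
  forall U, O U <-> qm_topology (dB le e f) U.
Proof.
  assert (Hc : cont_hyp le).
  { intros y. destruct (Hb y) as [D [H1 H2]]. exists D. split; auto. intros z Hz. apply H1; auto. }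
  intros U. split.
  - intros HU. apply Htop in HU. destruct HU as [V [HV HUV]].
    apply qm_open_of. apply dB_self.
    intros x Ux. apply HUV in Ux.
    destruct (EE_base le Hpo e Bs He Hb V (f x) HV Ux) as [n [En Hn]].
    exists (h (Cantor.to_nat (0%nat, n))). split. apply h_pos.
    intros y Hy. apply HUV. apply Hn. eapply noterm_I; eauto.
    intros Ht. unfold dB in Hy. rewrite qd_lt in Hy by apply h_pos.
    specialize (Hy _ Ht). lra.
  - intros HU. apply HU; auto.
    intros B [x [eps Hxe]].
    destruct (Rle_lt_dec eps 0) as [Hle|Hlt].
    + apply Htop. exists (fun _ => False). split.
      * split. auto. intros D s _ _ [].
      * intros y. rewrite Hxe. pose proof (qd_nonneg (fun c => term le e c (f x) (f y))).
        unfold dB. split; [lra|tauto].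
    + apply Htop. exists (fun p => forall c, term le e c (f x) p -> h c < eps). split.
      * split.
        -- intros p q Hp Hpq c Hq. apply Hp. eapply term_anti; eauto.
        -- intros D s HD Hs Hsp. destruct (h_small eps Hlt) as [K HK].
           destruct (coords_approx le Hpo Hc e (f x) D s (fun c => h c < eps) HD Hs Hsp K)
             as [d [Dd Hd]].
           exists d. split; auto. intros c Htc.
           destruct (Compare_dec.le_lt_dec c K) as [Hck|Hck]; auto.
           pose proof (h_lt _ _ Hck). lra.
      * intros y. rewrite Hxe. unfold dB. apply qd_lt. auto.
Qed.

Lemma dB_cb {T P : Type} (O : (T -> Prop) -> Prop)
  le (Hpo : partial_order le) (e : nat -> option P) (Bs : P -> Prop)
  (He : forall b, Bs b -> exists n, e n = Some b)
  (Hb : forall x, exists D, (forall d, D d -> Bs d /\ way_below le d x) /\ directed le D /\ is_sup le D x)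
  (f : T -> P)
  (Htop : forall U, O U <-> exists V, scott_open le V /\ forall x, U x <-> V (f x)) :
  countably_based O.
Proof.
  assert (Hc : cont_hyp le).
  { intros y. destruct (Hb y) as [D [H1 H2]]. exists D. split; auto. intros z Hz. apply H1; auto. }
  exists (fun n x => EE le e n (f x)). split.
  - intros n. apply Htop. exists (EE le e n). split. apply EE_open; auto. tauto.
  - intros U HU x Ux. apply Htop in HU. destruct HU as [V [HV HUV]].
    apply HUV in Ux. destruct (EE_base le Hpo e Bs He Hb V (f x) HV Ux) as [n [En Hn]].
    exists n. split; auto. intros y Ey. apply HUV. auto.
Qed.

Lemma stable {P : Type} le (e : nat -> option P) (ps : nat -> P) c n0 :
  (forall n m, (n0 <= n)%nat -> (n <= m)%nat -> ~ term le e c (ps n) (ps m)) ->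
  (exists m, (n0 <= m)%nat /\ exists l, WW le e c l /\ EE le e l (ps m)) ->
  exists l m1, WW le e c l /\ (forall m, (m1 <= m)%nat -> EE le e l (ps m)) /\
     (forall m, (m1 <= m)%nat -> forall l', WW le e c l' -> EE le e l' (ps m) -> (l <= l')%nat).
Proof.
  intros Hc Hex.
  assert (Hex' : exists l, exists m, (n0 <= m)%nat /\ WW le e c l /\ EE le e l (ps m)).
  { destruct Hex as [m [Hm [l [W E]]]]. eauto. }
  destruct (least_ex _ Hex') as [l [[m1 [Hm1 [W1 E1]]] Hmin]].
  exists l, m1. split; auto. split.
  - intros m Hm. assert (exists l', (l' <= l)%nat /\ WW le e c l' /\ EE le e l' (ps m)) as [l' [A [B C]]].
    { apply NNPP. intros Hn. apply (Hc m1 m); auto. exists l. split; auto. split; auto.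
      intros l' A B C. apply Hn. eauto. }
    assert (l <= l')%nat by (apply Hmin; exists m; split; [lia|auto]).
    replace l with l' by lia. auto.
  - intros m Hm l' W E. apply Hmin. exists m. split; [lia|auto].
Qed.

Lemma EE_some {P : Type} le (e : nat -> option P) l p b : EE le e l p -> e l = Some b -> way_below le b p.
Proof. intros [b' [H1 H2]] H3. rewrite H3 in H1. injection H1 as ->. auto. Qed.

Lemma dB_complete {T P : Type} le (Hpo : partial_order le)
  (Hdcpo : forall D, directed le D -> exists s, is_sup le D s)
  (e : nat -> option P) (Bs : P -> Prop)
  (He : forall b, Bs b -> exists n, e n = Some b)
  (Hb : forall x, exists D, (forall d, D d -> Bs d /\ way_below le d x) /\ directed le D /\ is_sup le D x)
  (f : T -> P) (Hnc : forall x, ~ compact_el le (f x))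
  (Hsurj : forall p, ~ compact_el le p -> exists x, f x = p) :
  complete_qm (dB le e f).
Proof.
  pose proof Hpo as Hpo'. destruct Hpo' as [Hr [Ht Ha]].
  intros xs Hcau. set (ps := fun m => f (xs m)).
  assert (Hcoord : forall c, exists n0, forall n m, (n0 <= n)%nat -> (n <= m)%nat -> ~ term le e c (ps n) (ps m)).
  { intros c. destruct (Hcau (h c) (h_pos c)) as [n0 Hn0]. exists n0. intros n m H1 H2 Htm.
    specialize (Hn0 n m H1 H2). unfold dB in Hn0. rewrite qd_lt in Hn0 by apply h_pos.
    specialize (Hn0 c Htm). lra. }
  set (Ev := fun b => exists N, forall m, (N <= m)%nat -> way_below le b (ps m)).
  assert (Hpair : forall i j bi bj, e i = Some bi -> e j = Some bj -> Ev bi -> Ev bj ->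
     exists bl, (exists l, e l = Some bl) /\ Ev bl /\ way_below le bi bl /\ way_below le bj bl /\ ~ le bl bi).
  { intros i j bi bj Hi Hj [Ni Hni] [Nj Hnj].
    set (c := Cantor.to_nat (S (S i), j)).
    destruct (Hcoord c) as [n0 Hn0].
    destruct (stable le e ps c n0 Hn0) as [l [m1 [Wl [El _]]]].
    { set (m := Nat.max n0 (Nat.max Ni Nj)). exists m. split. lia.
      destruct (noncompact_witness le Hpo Bs Hb bi bj (ps m)) as [bl [Bl [W1 [W2 [W3 N4]]]]].
      apply Hni; lia. apply Hnj; lia. apply Hnc.
      destruct (He bl Bl) as [l Hl]. exists l. split.
      - apply WW_2. exists bi, bj, bl. tauto.
      - exists bl. auto. }
    apply WW_2 in Wl. destruct Wl as [bi' [bj' [bl [Hi' [Hj' [Hl [W1 [W2 N3]]]]]]]].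
    rewrite Hi in Hi'. injection Hi' as <-. rewrite Hj in Hj'. injection Hj' as <-.
    exists bl. split; eauto. split; auto.
    exists m1. intros m Hm. eapply EE_some; eauto. }
  set (D := fun b => (exists n, e n = Some b) /\ Ev b).
  assert (HD : directed le D).
  { split.
    - set (c := Cantor.to_nat (1%nat, 0%nat)). destruct (Hcoord c) as [n0 Hn0].
      destruct (stable le e ps c n0 Hn0) as [l [m1 [_ [El _]]]].
      { exists n0. split. lia. destruct (Hb (ps n0)) as [Dn [HDn [[[b Hb0] _] _]]].
        destruct (HDn b Hb0) as [Bb Wb]. destruct (He b Bb) as [l Hl].
        exists l. split. apply WW_1. exists b. auto. }
      destruct (El m1 (le_n _)) as [b [Hl _]].
      exists b. split. eauto. exists m1. intros m Hm. eapply EE_some; eauto.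
    - intros a b [[i Hi] Ea] [[j Hj] Eb].
      destruct (Hpair i j a b Hi Hj Ea Eb) as [bl [Hl [Evl [W1 [W2 _]]]]].
      exists bl. split. split; auto. split; apply (wb_le le Hpo); auto. }
  destruct (Hdcpo D HD) as [x Hx].
  assert (HDx : forall b, D b -> way_below le b x).
  { intros b [[i Hi] Eb]. destruct (Hpair i i b b Hi Hi Eb Eb) as [bl [Hl [Evl [W1 _]]]].
    eapply wb_mono; eauto. apply Hx. split; auto. }
  assert (HxD : forall b, way_below le b x -> Ev b).
  { intros b Wb. destruct (Wb D x HD Hx (Hr _)) as [d [[_ [N HN]] Hbd]].
    exists N. intros m Hm. eapply wb_mono; eauto. }
  assert (Hxnc : ~ compact_el le x).
  { intros Hxc. destruct (Hxc D x HD Hx (Hr _)) as [d [Dd Hxd]].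
    assert (d = x) by (apply Ha; auto; apply Hx; auto). subst d.
    destruct Dd as [[i Hi] Ei]. destruct (Hpair i i x x Hi Hi Ei Ei) as [bl [Hl [Evl [_ [_ N]]]]].
    apply N. apply Hx. split; auto. }
  destruct (Hsurj x Hxnc) as [t Ht0].
  assert (HEE : forall l, EE le e l x <-> exists N, forall m, (N <= m)%nat -> EE le e l (ps m)).
  { intros l. split.
    - intros [b [Hl Wb]]. destruct (HxD b Wb) as [N HN]. exists N. intros m Hm. exists b. auto.
    - intros [N HN]. destruct (HN N (le_n _)) as [b [Hl _]]. exists b. split; auto.
      apply HDx. split. eauto. exists N. intros m Hm. eapply EE_some; eauto. }
  assert (Hpc : forall c, exists N, forall n, (N <= n)%nat -> ~ term le e c x (ps n) /\ ~ term le e c (ps n) x).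
  { intros c.
    assert (HA : exists N, forall n, (N <= n)%nat -> ~ term le e c x (ps n)).
    { destruct (classic (exists l, WW le e c l /\ EE le e l x)) as [Hex|Hnex].
      - destruct (least_ex _ Hex) as [l0 [[W0 E0] Hmin]].
        apply HEE in E0. destruct E0 as [N HN]. exists N. intros n Hn [l [Wl [El Hl]]].
        apply (Hl l0); auto.
      - exists 0%nat. intros n _ [l [Wl [El _]]]. eauto. }
    assert (HB : exists N, forall n, (N <= n)%nat -> ~ term le e c (ps n) x).
    { destruct (Hcoord c) as [n0 Hn0].
      destruct (classic (exists m, (n0 <= m)%nat /\ exists l, WW le e c l /\ EE le e l (ps m))) as [Hex|Hnex].
      - destruct (stable le e ps c n0 Hn0 Hex) as [l [m1 [Wl [El Hmin]]]].
        assert (Elx : EE le e l x) by (apply HEE; eauto).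
        exists m1. intros n Hn [l' [Wl' [El' Hl']]].
        apply (Hl' l); auto. eapply Hmin; eauto.
      - exists n0. intros n Hn [l [Wl [El _]]]. apply Hnex. eauto. }
    destruct HA as [N1 H1]. destruct HB as [N2 H2]. exists (Nat.max N1 N2).
    intros n Hn. split; [apply H1|apply H2]; lia. }
  assert (Hall : forall K, exists N, forall n, (N <= n)%nat -> forall c, (c <= K)%nat ->
     ~ term le e c x (ps n) /\ ~ term le e c (ps n) x).
  { induction K.
    - destruct (Hpc 0%nat) as [N HN]. exists N. intros n Hn c Hc. replace c with 0%nat by lia. auto.
    - destruct IHK as [N1 H1]. destruct (Hpc (S K)) as [N2 H2]. exists (Nat.max N1 N2).
      intros n Hn c Hc. destruct (Nat.eq_dec c (S K)) as [->|Hne].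
      + apply H2. lia.
      + apply H1. lia. lia. }
  exists t. apply conv_dhat. apply dB_triangle.
  intros eps Heps. destruct (h_small eps Heps) as [K HK]. destruct (Hall K) as [N HN].
  exists N. intros n Hn. unfold dhat. apply Rmax_lub_lt.
  - unfold dB. rewrite Ht0. eapply Rle_lt_trans. apply (qd_small _ K).
    + intros c Htc. destruct (Compare_dec.le_lt_dec c K) as [Hck|Hck]; auto. exfalso. exact (proj1 (HN n Hn c Hck) Htc).
    + pose proof (h_le K (S K) (le_S _ _ (le_n _))). lra.
  - unfold dB. rewrite Ht0. eapply Rle_lt_trans. apply (qd_small _ K).
    + intros c Htc. destruct (Compare_dec.le_lt_dec c K) as [Hck|Hck]; auto. exfalso. exact (proj2 (HN n Hn c Hck) Htc).
    + pose proof (h_le K (S K) (le_S _ _ (le_n _))). lra.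
Qed.

Lemma partB (T : Type) (O : (T -> Prop) -> Prop) (HO : is_topology O) (P : Type) (le : P -> P -> Prop) :
  omega_continuous le -> homeomorphic_to_noncompact O le -> quasi_Polish O.
Proof.
  intros [[Hpo Hsup] [Bs [[e He] Hb]]] [f [Hinj [Hnc [Hsurj Htop]]]].
  split.
  - eapply dB_cb; eauto.
  - exists (dB le e f). split; [|split].
    + eapply dB_qm; eauto.
    + eapply dB_complete; eauto.
    + eapply dB_topology; eauto.
Qed.

Record Ideal {Q : Type} (R : Q -> Q -> Prop) := mkIdeal {
  ip : Q -> Prop;
  i_ne : exists q, ip q;
  i_low : forall q r, R q r -> ip r -> ip q;
  i_dir : forall q r, ip q -> ip r -> exists s, ip s /\ R q s /\ R r s }.
Arguments ip {Q R} _ _.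
Arguments i_ne {Q R} _.
Arguments i_low {Q R} _ _ _ _ _.
Arguments i_dir {Q R} _ _ _ _ _.

Definition ile {Q : Type} (R : Q -> Q -> Prop) (I J : Ideal R) : Prop := forall q, ip I q -> ip J q.

Lemma ideal_eq {Q : Type} (R : Q -> Q -> Prop) (I J : Ideal R) : (forall q, ip I q <-> ip J q) -> I = J.
Proof.
  destruct I as [p1 a1 b1 c1], J as [p2 a2 b2 c2]. simpl. intros H.
  assert (p1 = p2) by (apply set_ext; auto). subst p2.
  f_equal; apply proof_irrelevance.
Qed.

Lemma ile_po {Q : Type} (R : Q -> Q -> Prop) : partial_order (ile R).
Proof.
  split; [|split].
  - intros I q; auto.
  - intros I J K H1 H2 q Hq; auto.
  - intros I J H1 H2. apply ideal_eq. intros q; split; auto.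
Qed.

Definition union_ideal {Q : Type} (R : Q -> Q -> Prop) (D : Ideal R -> Prop) (HD : directed (ile R) D) : Ideal R.
Proof.
  refine (mkIdeal Q R (fun q => exists I, D I /\ ip I q) _ _ _).
  - destruct HD as [[I HI] _]. destruct (i_ne I) as [q Hq]. exists q, I. auto.
  - intros q r Hqr [I [HI Hr]]. exists I. split; auto. eapply i_low; eauto.
  - intros q r [I1 [H1 Hq]] [I2 [H2 Hr]]. destruct HD as [_ HD].
    destruct (HD I1 I2 H1 H2) as [I3 [H3 [L1 L2]]].
    destruct (i_dir I3 q r (L1 q Hq) (L2 r Hr)) as [s [Hs [A B]]].
    exists s. split; auto. exists I3. auto.
Defined.

Lemma union_sup {Q : Type} (R : Q -> Q -> Prop) D (HD : directed (ile R) D) :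
  is_sup (ile R) D (union_ideal R D HD).
Proof.
  split.
  - intros I HI q Hq. simpl. eauto.
  - intros U HU q [I [HI Hq]]. apply (HU I HI); auto.
Qed.

Lemma sup_is_union {Q : Type} (R : Q -> Q -> Prop) D s :
  directed (ile R) D -> is_sup (ile R) D s -> forall q, ip s q <-> exists I, D I /\ ip I q.
Proof.
  intros HD Hs. pose proof (sup_unique _ (ile_po R) _ _ _ Hs (union_sup R D HD)) as E.
  rewrite E. simpl. tauto.
Qed.

Definition prin {Q : Type} (R : Q -> Q -> Prop) (HR : forall q, R q q)
  (HT : forall a b c, R a b -> R b c -> R a c) (q : Q) : Ideal R.
Proof.
  refine (mkIdeal Q R (fun r => R r q) _ _ _).
  - exists q. auto.
  - intros a b H1 H2. eauto.
  - intros a b H1 H2. exists q. auto.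
Defined.

Lemma prin_dir {Q : Type} (R : Q -> Q -> Prop) (HR : forall q, R q q)
  (HT : forall a b c, R a b -> R b c -> R a c) (J : Ideal R) :
  directed (ile R) (fun K => exists q, ip J q /\ K = prin R HR HT q).
Proof.
  split.
  - destruct (i_ne J) as [q Hq]. exists (prin R HR HT q). eauto.
  - intros A B [q [Hq ->]] [r [Hr ->]]. destruct (i_dir J q r Hq Hr) as [s [Hs [H1 H2]]].
    exists (prin R HR HT s). split. eauto.
    split; intros x Hx; simpl in *; eauto.
Qed.

Lemma prin_sup {Q : Type} (R : Q -> Q -> Prop) (HR : forall q, R q q)
  (HT : forall a b c, R a b -> R b c -> R a c) (J : Ideal R) :
  is_sup (ile R) (fun K => exists q, ip J q /\ K = prin R HR HT q) J.
Proof.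
  split.
  - intros K [q [Hq ->]] r Hr. simpl in Hr. eapply i_low; eauto.
  - intros U HU q Hq. apply (HU (prin R HR HT q)). eauto. simpl. auto.
Qed.

Lemma wb_prin {Q : Type} (R : Q -> Q -> Prop) (HR : forall q, R q q)
  (HT : forall a b c, R a b -> R b c -> R a c) q (J : Ideal R) :
  way_below (ile R) (prin R HR HT q) J <-> ip J q.
Proof.
  split.
  - intros W. destruct (W _ J (prin_dir R HR HT J) (prin_sup R HR HT J) (fun _ x => x))
      as [K [[r [Hr ->]] Hle]].
    specialize (Hle q (HR q)). simpl in Hle. eapply i_low; eauto.
  - intros Hq D s HD Hs Hle. specialize (Hle q Hq).
    rewrite (sup_is_union R D s HD Hs) in Hle. destruct Hle as [I [HI Hq']].
    exists I. split; auto. intros r Hr. simpl in Hr. eapply i_low; eauto.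
Qed.

Lemma compact_ideal {Q : Type} (R : Q -> Q -> Prop) (HR : forall q, R q q)
  (HT : forall a b c, R a b -> R b c -> R a c) (J : Ideal R) :
  compact_el (ile R) J -> exists q, ip J q /\ forall r, ip J r -> R r q.
Proof.
  intros W. destruct (W _ J (prin_dir R HR HT J) (prin_sup R HR HT J) (fun _ x => x))
      as [K [[r [Hr ->]] Hle]].
  exists r. split; auto.
Qed.

Lemma ideal_alg {Q : Type} (R : Q -> Q -> Prop) (HR : forall q, R q q)
  (HT : forall a b c, R a b -> R b c -> R a c) (enumQ : nat -> Q)
  (Henum : forall q, exists n, enumQ n = q) : omega_algebraic (ile R).
Proof.
  split.
  - split. apply ile_po. intros D HD. exists (union_ideal R D HD). apply union_sup.
  - exists (fun K => exists q, K = prin R HR HT q). split; [|split].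
    + exists (fun n => Some (prin R HR HT (enumQ n))). intros b [q ->].
      destruct (Henum q) as [n Hn]. exists n. rewrite Hn. auto.
    + intros b [q ->]. unfold compact_el. apply wb_prin. simpl. auto.
    + intros J. exists (fun K => exists q, ip J q /\ K = prin R HR HT q). split; [|split].
      * intros K [q [Hq ->]]. split. eauto. apply wb_prin. auto.
      * apply prin_dir.
      * apply prin_sup.
Qed.

Lemma scott_prin {Q : Type} (R : Q -> Q -> Prop) (HR : forall q, R q q)
  (HT : forall a b c, R a b -> R b c -> R a c) (V : Ideal R -> Prop) J :
  scott_open (ile R) V -> V J -> exists q, ip J q /\ forall K, ip K q -> V K.
Proof.
  intros [Vu Vi] VJ. destruct (Vi _ J (prin_dir R HR HT J) (prin_sup R HR HT J) VJ)
    as [K [[q [Hq ->]] VK]].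
  exists q. split; auto. intros K' HK'. apply (Vu _ _ VK). intros r Hr. simpl in Hr. eapply i_low; eauto.
Qed.

Lemma scott_up {Q : Type} (R : Q -> Q -> Prop) (W : Q -> Prop) :
  scott_open (ile R) (fun J => exists q, ip J q /\ W q).
Proof.
  split.
  - intros I J [q [Hq Wq]] H. exists q. auto.
  - intros D s HD Hs [q [Hq Wq]]. rewrite (sup_is_union R D s HD Hs) in Hq.
    destruct Hq as [I [HI Hq]]. exists I. split; auto. exists q. auto.
Qed.

(* ---------- Part 5: the ideal domain of formal balls of a quasi-Polish space ---------- *)

Definition qlt {T : Type} (d : T -> T -> R) (cent : nat -> T) (q r : nat * nat) : Prop :=
  (snd q < snd r)%nat /\ d (cent (fst q)) (cent (fst r)) + h (snd r) < h (snd q).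

Definition qle {T : Type} (d : T -> T -> R) (cent : nat -> T) (q r : nat * nat) : Prop :=
  q = r \/ qlt d cent q r.

Lemma qle_refl {T : Type} d (cent : nat -> T) q : qle d cent q q.
Proof. left. auto. Qed.

Lemma qlt_trans {T : Type} d (cent : nat -> T) (Ht : triangle d) a b c :
  qlt d cent a b -> qlt d cent b c -> qlt d cent a c.
Proof.
  intros [H1 H2] [H3 H4]. split. lia.
  pose proof (Ht (cent (fst a)) (cent (fst b)) (cent (fst c))). lra.
Qed.

Lemma qle_trans {T : Type} d (cent : nat -> T) (Ht : triangle d) a b c :
  qle d cent a b -> qle d cent b c -> qle d cent a c.
Proof.
  intros [->|H1] [->|H2]; unfold qle; auto. right. eapply qlt_trans; eauto.
Qed.

Lemma qle_lt_trans {T : Type} d (cent : nat -> T) (Ht : triangle d) a b c :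
  qle d cent a b -> qlt d cent b c -> qlt d cent a c.
Proof. intros [->|H1] H2; auto. eapply qlt_trans; eauto. Qed.

Definition pt {T : Type} (d : T -> T -> R) (cent : nat -> T) (x : T) (q : nat * nat) : Prop :=
  d (cent (fst q)) x < h (snd q).

Definition dense_cent {T : Type} (d : T -> T -> R) (cent : nat -> T) : Prop :=
  forall y k, exists i, d y (cent i) < h k /\ d (cent i) y < h k.

Lemma pt_refine {T : Type} d (cent : nat -> T) (Ht : triangle d) (Hd : dense_cent d cent) x q1 q2 :
  pt d cent x q1 -> pt d cent x q2 -> exists r, pt d cent x r /\ qlt d cent q1 r /\ qlt d cent q2 r.
Proof.
  unfold pt. intros H1 H2.
  set (delta := Rmin (h (snd q1) - d (cent (fst q1)) x) (h (snd q2) - d (cent (fst q2)) x)).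
  assert (Hdel : 0 < delta) by (apply Rmin_glb_lt; lra).
  destruct (h_small (delta / 2)) as [K HK]. lra.
  set (m := S (Nat.max K (Nat.max (snd q1) (snd q2)))).
  assert (Hm : h m < delta / 2) by (eapply Rle_lt_trans; [apply h_le|exact HK]; lia).
  destruct (Hd x m) as [j [Hj1 Hj2]].
  exists (j, m). unfold qlt; simpl. split; auto.
  pose proof (Rmin_l (h (snd q1) - d (cent (fst q1)) x) (h (snd q2) - d (cent (fst q2)) x)).
  pose proof (Rmin_r (h (snd q1) - d (cent (fst q1)) x) (h (snd q2) - d (cent (fst q2)) x)).
  fold delta in H, H0.
  pose proof (Ht (cent (fst q1)) x (cent j)). pose proof (Ht (cent (fst q2)) x (cent j)).
  split; split; try lia; lra.
Qed.

Definition Iof {T : Type} (d : T -> T -> R) (cent : nat -> T) (Ht : triangle d) (Hd : dense_cent d cent)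
  (x : T) : Ideal (qle d cent).
Proof.
  refine (mkIdeal _ (qle d cent) (pt d cent x) _ _ _).
  - destruct (Hd x 0%nat) as [i [_ Hi]]. exists (i, 0%nat). exact Hi.
  - intros q r [->|[H1 H2]] Hr; auto. unfold pt in *.
    pose proof (Ht (cent (fst q)) (cent (fst r)) x). lra.
  - intros q r Hq Hr. destruct (pt_refine d cent Ht Hd x q r Hq Hr) as [s [Hs [A B]]].
    exists s. unfold qle. auto.
Defined.

Lemma Iof_noncompact {T : Type} d (cent : nat -> T) (Ht : triangle d) (Hd : dense_cent d cent) x :
  ~ compact_el (ile (qle d cent)) (Iof d cent Ht Hd x).
Proof.
  intros Hc. destruct (compact_ideal (qle d cent) (qle_refl d cent) (qle_trans d cent Ht) _ Hc)
    as [q [Hq Hmax]].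
  destruct (pt_refine d cent Ht Hd x q q Hq Hq) as [r [Hr [[A _] _]]].
  destruct (Hmax r Hr) as [E|[B _]]. subst. lia. lia.
Qed.

Lemma Iof_le {T : Type} d (cent : nat -> T) (Hq : quasi_metric d) (Ht : triangle d) (Hd : dense_cent d cent) x y :
  (forall q, pt d cent x q -> pt d cent y q) -> d x y = 0.
Proof.
  intros H. destruct Hq as [Hnn _].
  destruct (Rle_lt_dec (d x y) 0) as [Hle|Hlt]. { specialize (Hnn x y). lra. }
  exfalso. destruct (h_small (d x y / 2)) as [k Hk]. lra.
  destruct (Hd x k) as [i [H1 H2]].
  assert (pt d cent y (i, k)) by (apply H; exact H2).
  unfold pt in H0. simpl in H0. pose proof (Ht x (cent i) y). lra.
Qed.

Lemma Iof_surj {T : Type} d (cent : nat -> T) (Hq : quasi_metric d) (Ht : triangle d) (Hd : dense_cent d cent)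
  (Hcomp : complete_qm d) (J : Ideal (qle d cent)) :
  ~ compact_el (ile (qle d cent)) J -> exists y, Iof d cent Ht Hd y = J.
Proof.
  intros Hnc. destruct Hq as [Hnn [Heq _]].
  assert (Hself : forall x, d x x = 0) by (intros x; apply (proj1 (Heq x x)); auto).
  assert (Hnm : forall q, ip J q -> exists r, ip J r /\ ~ qle d cent r q).
  { intros q Hqj. apply NNPP. intros Hn. apply Hnc. intros D s HD Hs Hle.
    specialize (Hle q Hqj). rewrite (sup_is_union _ D s HD Hs) in Hle.
    destruct Hle as [I [HI Hq']]. exists I. split; auto. intros r Hr.
    eapply i_low; [|exact Hq']. apply NNPP. intros Hn'. apply Hn. eauto. }
  assert (Hsucc : forall q p, ip J q -> ip J p -> exists s, ip J s /\ qlt d cent q s /\ qle d cent p s).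
  { intros q p Hqj Hpj. destruct (Hnm q Hqj) as [r [Hr Hnr]].
    destruct (i_dir J q r Hqj Hr) as [s1 [Hs1 [A1 B1]]].
    destruct (i_dir J s1 p Hs1 Hpj) as [s [Hs [A2 B2]]].
    exists s. split; auto. split; auto.
    destruct (qle_trans d cent Ht _ _ _ A1 A2) as [E|L]; auto.
    subst s. exfalso. apply Hnr. eapply qle_trans; eauto. }
  assert (Hnext : forall (n : nat) (q : nat * nat), exists s, ip J q -> ip J s /\ qlt d cent q s /\
      (ip J (Cantor.of_nat n) -> qle d cent (Cantor.of_nat n) s)).
  { intros n q. destruct (classic (ip J q)) as [Hqj|Hqj]; [|exists q; tauto].
    destruct (classic (ip J (Cantor.of_nat n))) as [Hp|Hp].
    - destruct (Hsucc q _ Hqj Hp) as [s [A [B C]]]. exists s. auto.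
    - destruct (Hsucc q q Hqj Hqj) as [s [A [B C]]]. exists s. tauto. }
  pose (next := fun n q => proj1_sig (constructive_indefinite_description _ (Hnext n q))).
  assert (Hnext_spec : forall n q, ip J q -> ip J (next n q) /\ qlt d cent q (next n q) /\
      (ip J (Cantor.of_nat n) -> qle d cent (Cantor.of_nat n) (next n q))).
  { intros n q. unfold next. destruct (constructive_indefinite_description _ _) as [s Hs]. simpl. auto. }
  destruct (constructive_indefinite_description _ (i_ne J)) as [q0 Hq0].
  pose (chain := fix ch (n : nat) : nat * nat := match n with 0%nat => q0 | S m => next m (ch m) end).
  assert (Hin : forall n, ip J (chain n)).
  { induction n. exact Hq0. apply (Hnext_spec n (chain n) IHn). }
  assert (Hlt : forall n, qlt d cent (chain n) (chain (S n))).
  { intros n. apply (Hnext_spec n (chain n) (Hin n)). }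
  assert (Hcof : forall n, ip J (Cantor.of_nat n) -> qle d cent (Cantor.of_nat n) (chain (S n))).
  { intros n. apply (Hnext_spec n (chain n) (Hin n)). }
  assert (Hmono : forall n m, (n < m)%nat -> qlt d cent (chain n) (chain m)).
  { intros n m Hnm0. induction Hnm0. apply Hlt. eapply qlt_trans; eauto. }
  assert (Hlev : forall n, (n <= snd (chain n))%nat).
  { induction n. lia. destruct (Hlt n) as [A _]. lia. }
  set (a := fun n => cent (fst (chain n))).
  assert (Hcau : cauchy d a).
  { intros eps Heps. destruct (h_small eps Heps) as [K HK]. exists K. intros n m Hn Hm.
    destruct (Nat.eq_dec n m) as [->|Hne]. rewrite Hself. auto.
    destruct (Hmono n m ltac:(lia)) as [_ B]. unfold a.
    pose proof (h_pos (snd (chain m))). pose proof (h_le K (snd (chain n)) ltac:(specialize (Hlev n); lia)).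
    lra. }
  destruct (Hcomp a Hcau) as [y Hy].
  assert (Hconv : forall eps, 0 < eps -> exists N, forall n, (N <= n)%nat -> d y (a n) < eps /\ d (a n) y < eps).
  { intros eps Heps. destruct (Hy (fun z => dhat d y z < eps)) as [N HN].
    - apply gen_top_incl. exists y, eps. tauto.
    - unfold dhat. rewrite Hself. rewrite Rmax_left; lra.
    - exists N. intros n Hn. specialize (HN n Hn). unfold dhat in HN.
      pose proof (Rmax_l (d y (a n)) (d (a n) y)). pose proof (Rmax_r (d y (a n)) (d (a n) y)). lra. }
  assert (Hlec : forall m, d (a m) y <= h (snd (chain m))).
  { intros m. apply Rnot_lt_le. intros Hc.
    destruct (Hconv (d (a m) y - h (snd (chain m)))) as [N HN]. lra.
    set (n := Nat.max N (S m)).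
    destruct (Hmono m n ltac:(lia)) as [_ B]. destruct (HN n ltac:(lia)) as [_ C].
    pose proof (Ht (a m) (a n) y). pose proof (h_pos (snd (chain n))). unfold a in *. lra. }
  exists y. apply ideal_eq. intros q. simpl. unfold pt. split.
  - intros Hpt. set (delta := h (snd q) - d (cent (fst q)) y).
    destruct (h_small (delta / 2)) as [K HK]. unfold delta; lra.
    destruct (Hconv (delta / 2)) as [N HN]. unfold delta; lra.
    set (n := Nat.max N (S (Nat.max K (snd q)))).
    destruct (HN n ltac:(lia)) as [C _].
    apply (i_low J q (chain n)); [|apply Hin].
    right. split. specialize (Hlev n). lia.
    pose proof (h_le K (snd (chain n)) ltac:(specialize (Hlev n); lia)).
    pose proof (Ht (cent (fst q)) y (cent (fst (chain n)))). unfold a in C. unfold delta in *. lra.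
  - intros Hqj. set (n := Cantor.to_nat q).
    assert (Eq : Cantor.of_nat n = q) by apply Cantor.cancel_of_to.
    assert (Hc1 : qle d cent q (chain (S n))) by (rewrite <- Eq; apply Hcof; rewrite Eq; auto).
    destruct (qle_lt_trans d cent Ht _ _ _ Hc1 (Hlt (S n))) as [_ B].
    pose proof (Hlec (S (S n))). pose proof (Ht (cent (fst q)) (cent (fst (chain (S (S n))))) y).
    unfold a in *. lra.
Qed.

Lemma Iof_top {T : Type} (O : (T -> Prop) -> Prop) d (cent : nat -> T) (Hq : quasi_metric d) (Ht : triangle d)
  (Hd : dense_cent d cent) (HOd : forall U, O U <-> qm_topology d U) :
  forall U, O U <-> exists V, scott_open (ile (qle d cent)) V /\ forall x, U x <-> V (Iof d cent Ht Hd x).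
Proof.
  destruct Hq as [Hnn [Heq _]].
  assert (Hself : forall x, d x x = 0) by (intros x; apply (proj1 (Heq x x)); auto).
  intros U. rewrite HOd. split.
  - intros HU. exists (fun J => exists q, ip J q /\ forall x, pt d cent x q -> U x). split.
    + apply scott_up.
    + intros x. simpl. split.
      * intros Ux. destruct (qm_open_balls d Ht U HU x Ux) as [eps [He Hb]].
        destruct (h_small (eps / 2)) as [k Hk]. lra.
        destruct (Hd x k) as [i [H1 H2]]. exists (i, k). split. exact H2.
        intros z Hz. apply Hb. unfold pt in Hz. simpl in Hz. pose proof (Ht x (cent i) z). lra.
      * intros [q [Hq1 Hq2]]. auto.
  - intros [V [HV HUV]]. apply qm_open_of; auto. intros x Ux. apply HUV in Ux.
    destruct (scott_prin (qle d cent) (qle_refl d cent) (qle_trans d cent Ht) V _ HV Ux) as [q [Hq1 Hq2]].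
    simpl in Hq1. unfold pt in Hq1.
    exists (h (snd q) - d (cent (fst q)) x). split. lra.
    intros y Hy. apply HUV. apply Hq2. simpl. unfold pt.
    pose proof (Ht (cent (fst q)) x y). lra.
Qed.

Lemma dense_exists {T : Type} (O : (T -> Prop) -> Prop) d (x0 : T) (Hq : quasi_metric d)
  (HOd : forall U, O U <-> qm_topology d U) (Hcb : countably_based O) : exists cent, dense_cent d cent.
Proof.
  destruct Hq as [Hnn [Heq _]].
  assert (Hself : forall x, d x x = 0) by (intros x; apply (proj1 (Heq x x)); auto).
  destruct Hcb as [B [HB Hbase]].
  exists (fun c => let (n, k) := Cantor.of_nat c in
     match excluded_middle_informative (exists a, B n a /\ forall z, B n z -> d a z < h k) with
     | left H => proj1_sig (constructive_indefinite_description _ H)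
     | right _ => x0 end).
  intros y k.
  assert (HU : O (fun z => d y z < h k)) by (apply HOd; apply gen_top_incl; exists y, (h k); tauto).
  destruct (Hbase _ HU y) as [n [Bny Hsub]]. { rewrite Hself. apply h_pos. }
  exists (Cantor.to_nat (n, k)). rewrite Cantor.cancel_of_to.
  destruct (excluded_middle_informative _) as [H|H].
  - destruct (constructive_indefinite_description _ H) as [a [Ba Ha]]. simpl. split; auto.
  - exfalso. apply H. exists y. split; auto.
Qed.

Lemma partA (T : Type) (O : (T -> Prop) -> Prop) (HO : is_topology O) :
  quasi_Polish O -> exists (P : Type) (le : P -> P -> Prop), omega_algebraic le /\ homeomorphic_to_noncompact O le.
Proof.
  intros [Hcb [d [Hq [Hcomp HOd]]]].
  destruct (classic (exists x0 : T, True)) as [[x0 _]|Hempty].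
  - assert (Ht : triangle d) by (destruct Hq as [_ [_ Ht]]; exact Ht).
    destruct (dense_exists O d x0 Hq HOd Hcb) as [cent Hd].
    exists (Ideal (qle d cent)), (ile (qle d cent)). split.
    + apply (ideal_alg _ (qle_refl d cent) (qle_trans d cent Ht) Cantor.of_nat).
      intros q. exists (Cantor.to_nat q). apply Cantor.cancel_of_to.
    + exists (Iof d cent Ht Hd). split; [|split; [|split]].
      * intros x y E. apply (proj2 Hq). split; apply (Iof_le d cent Hq Ht Hd); intros q Hx.
        -- change (ip (Iof d cent Ht Hd y) q). rewrite <- E. exact Hx.
        -- change (ip (Iof d cent Ht Hd x) q). rewrite E. exact Hx.
      * intros x. apply Iof_noncompact.
      * intros p Hp. apply (Iof_surj d cent Hq Ht Hd Hcomp p Hp).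
      * apply Iof_top; auto.
  - exists unit, (fun _ _ => True). split.
    + split.
      * split. split; [|split]; auto. intros [] [] _ _. auto.
        intros D HD. exists tt. split; auto.
      * exists (fun _ => True). split; [|split].
        -- exists (fun _ => Some tt). intros [] _. exists 0%nat. auto.
        -- intros [] _ D s [[[] Hd] _] _ _. exists tt. auto.
        -- intros []. exists (fun _ => True). split.
           ++ intros [] _. split; auto. intros D s [[[] Hd] _] _ _. exists tt. auto.
           ++ split. split. exists tt; auto. intros [] [] _ _. exists tt. auto. split; auto.
    + exists (fun _ => tt). split; [|split; [|split]].
      * intros x. exfalso. apply Hempty. eauto.
      * intros x. exfalso. apply Hempty. eauto.
      * intros [] Hc. exfalso. apply Hc. intros D s [[[] Hd] _] _ _. exists tt. auto.
      * intros U. split.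
        -- intros _. exists (fun _ => True). split.
           ++ split; auto. intros D s [[[] Hd] _] _ _. exists tt. auto.
           ++ intros x. exfalso. apply Hempty. eauto.
        -- intros _. destruct HO as [_ [_ Hu]].
           assert (E : U = (fun x => exists V, (fun _ => False) V /\ V x)).
           { apply set_ext. intros x. exfalso. apply Hempty. eauto. }
           rewrite E. apply Hu. intros _ [].
Qed.

Theorem theorem53 (T : Type) (O : (T -> Prop) -> Prop) (HO : is_topology O) :
  (quasi_Polish O <->
     exists (P : Type) (le : P -> P -> Prop),
       omega_continuous le /\ homeomorphic_to_noncompact O le) /\
  (quasi_Polish O <->
     exists (P : Type) (le : P -> P -> Prop),
       omega_algebraic le /\ homeomorphic_to_noncompact O le).
Proof.
  assert (alg_cont : forall (P : Type) (le : P -> P -> Prop), omega_algebraic le -> omega_continuous le).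
  { intros P le [H1 [B [H2 [_ H3]]]]. split; auto. exists B. auto. }
  split; split.
  - intros HQ. destruct (partA T O HO HQ) as [P [le [H1 H2]]]. exists P, le. auto.
  - intros [P [le [H1 H2]]]. eapply partB; eauto.
  - apply partA; auto.
  - intros [P [le [H1 H2]]]. eapply partB; eauto.
Qed.
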